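(* Let $V$ be a real vector space with an inner product of signature $(p,q)$ where $p\ge q\ge2$. (1) If $p=q$, then there exists an algebraic curvature tensor $R$ on $V$ which has spacelike rank $4$ and timelike rank $4$, and which does not have constant mixed rank. (2) If $p>q$, then there exists an algebraic curvature tensor $R$ on $V$ which has spacelike rank $4$, and which does not have constant timelike rank and does not have mixed rank $4$.
   Context: An inner product of signature $(p,q)$ is a non-degenerate symmetric bilinear form $(\cdot,\cdot)$ whose maximal negative definite subspaces have dimension $p$ and maximal positive definite subspaces dimension $q$. A $2$-plane $\pi$ is spacelike (resp. timelike, mixed) if the induced form on $\pi$ has signature $(0,2)$ (resp. $(2,0)$, $(1,1)$). An algebraic curvature tensor is $R\in\otimes^4V^*$ with $R(x,y,z,w)=R(z,w,x,y)=-R(y,x,z,w)$ and $R(x,y,z,w)+R(y,z,x,w)+R(z,x,y,w)=0$; the operator $R(x,y)$ is defined by $R(x,y,z,w)=(R(x,y)z,w)$. For a non-degenerate $2$-plane $\pi$ with oriented basis $\{e_1,e_2\}$, $R(\pi):=|(e_1,e_1)(e_2,e_2)-(e_1,e_2)^2|^{-1/2}R(e_1,e_2)$. $R$ has spacelike rank $r$ if $\operatorname{rank}R(\pi)=r$ for every oriented spacelike $2$-plane $\pi$; timelike and mixed rank $r$ are defined analogously. Constant timelike (mixed) rank means timelike (mixed) rank $r$ for some $r$. *)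

(* Defs.v *)
(* V = 'rV[R]_n over R : realType, inner product given by a
   symmetric matrix G : (x,y) = x *m G *m y^T. *)
From mathcomp Require Import all_boot all_order all_algebra.
From mathcomp Require Import reals.
Set Implicit Arguments. Unset Strict Implicit. Unset Printing Implicit Defensive.
Import Order.TTheory GRing.Theory Num.Theory.
Local Open Scope ring_scope.

Section Defs.
Variable R : realType.

Definition form m (G : 'M[R]_m) (x y : 'rV[R]_m) : R := (x *m G *m y^T) 0 0.

Definition negdef_sub m (G : 'M[R]_m) (U : 'M[R]_m) : Prop :=
  forall v : 'rV[R]_m, (v <= U)%MS -> v != 0 -> form G v v < 0.
Definition posdef_sub m (G : 'M[R]_m) (U : 'M[R]_m) : Prop :=
  forall v : 'rV[R]_m, (v <= U)%MS -> v != 0 -> 0 < form G v v.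

Definition inner_product_sig m (G : 'M[R]_m) (p q : nat) : Prop :=
  [/\ G^T = G, G \in unitmx,
      (exists U, negdef_sub G U /\ \rank U = p) /\
        (forall U, negdef_sub G U -> (\rank U <= p)%N)
    & (exists U, posdef_sub G U /\ \rank U = q) /\
        (forall U, posdef_sub G U -> (\rank U <= q)%N)].

(* elements of (x)^4 V^*, given by their coefficients *)
Definition tensor4 (n : nat) := 'I_n -> 'I_n -> 'I_n -> 'I_n -> R.

Definition tev n (T : tensor4 n) (x y z w : 'rV[R]_n) : R :=
  \sum_(i < n) \sum_(j < n) \sum_(k < n) \sum_(l < n)
     T i j k l * x 0 i * y 0 j * z 0 k * w 0 l.

Definition is_act n (T : tensor4 n) : Prop :=
  forall x y z w : 'rV[R]_n,
    [/\ tev T x y z w = tev T z w x y,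
        tev T x y z w = - tev T y x z w
      & tev T x y z w + tev T y z x w + tev T z x y w = 0].

(* matrix of the operator R(x,y) acting on row vectors: z *m curv_op = R(x,y)z,
   characterised by (R(x,y)z, w) = R(x,y,z,w) *)
Definition curv_op n (G : 'M[R]_n) (T : tensor4 n) (x y : 'rV[R]_n) : 'M[R]_n :=
  (\matrix_(k < n, l < n) tev T x y (delta_mx 0 k) (delta_mx 0 l)) *m invmx G.

Definition plane_op n (G : 'M[R]_n) (T : tensor4 n) (e1 e2 : 'rV[R]_n) : 'M[R]_n :=
  (Num.sqrt `|form G e1 e1 * form G e2 e2 - form G e1 e2 ^+ 2|)^-1
    *: curv_op G T e1 e2.

Definition gram2 n (G : 'M[R]_n) (e1 e2 : 'rV[R]_n) : 'M[R]_2 :=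
  \matrix_(i < 2, j < 2)
     form G (if i == 0 :> nat then e1 else e2) (if j == 0 :> nat then e1 else e2).

Definition plane_sig n (G : 'M[R]_n) (a b : nat) (e1 e2 : 'rV[R]_n) : Prop :=
  \rank (col_mx e1 e2) = 2%N /\ inner_product_sig (gram2 G e1 e2) a b.

Definition spacelike n (G : 'M[R]_n) := plane_sig G 0 2.
Definition timelike n (G : 'M[R]_n) := plane_sig G 2 0.
Definition mixed n (G : 'M[R]_n) := plane_sig G 1 1.

Definition has_rank_on n (kind : 'rV[R]_n -> 'rV[R]_n -> Prop)
  (G : 'M[R]_n) (T : tensor4 n) (r : nat) : Prop :=
  forall e1 e2, kind e1 e2 -> \rank (plane_op G T e1 e2) = r.

Definition spacelike_rank n (G : 'M[R]_n) T r := has_rank_on (spacelike G) G T r.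
Definition timelike_rank n (G : 'M[R]_n) T r := has_rank_on (timelike G) G T r.
Definition mixed_rank n (G : 'M[R]_n) T r := has_rank_on (mixed G) G T r.
Definition const_timelike_rank n (G : 'M[R]_n) T := exists r, timelike_rank G T r.
Definition const_mixed_rank n (G : 'M[R]_n) T := exists r, mixed_rank G T r.

End Defs.

(* Main.v *)
Require Import Defs.
From mathcomp Require Import all_boot all_order all_algebra.
From mathcomp Require Import reals.
From mathcomp Require Import ring lra.
From Stdlib Require Import Classical.
Set Implicit Arguments. Unset Strict Implicit. Unset Printing Implicit Defensive.
Import Order.TTheory GRing.Theory Num.Theory.
Local Open Scope ring_scope.

Section Form.
Variable R : realType.
Variable n : nat.
Variable G : 'M[R]_n.
Hypothesis Gsym : G^T = G.
Hypothesis Gu : G \in unitmx.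

Local Notation fm := (@Defs.form R n G).

Lemma formDl x y z : fm (x + y) z = fm x z + fm y z.
Proof. by rewrite /Defs.form !mulmxDl mxE. Qed.
Lemma formZl a x z : fm (a *: x) z = a * fm x z.
Proof. by rewrite /Defs.form -!scalemxAl mxE. Qed.
Lemma formC x y : fm x y = fm y x.
Proof.
rewrite /Defs.form -[in LHS](trmxK (x *m G *m y^T)) mxE.
by rewrite !trmx_mul trmxK Gsym mulmxA.
Qed.
Lemma formDr x y z : fm z (x + y) = fm z x + fm z y.
Proof. by rewrite !(formC z) formDl. Qed.
Lemma formZr a x z : fm z (a *: x) = a * fm z x.
Proof. by rewrite !(formC z) formZl. Qed.
Lemma form0l z : fm 0 z = 0.
Proof. by rewrite /Defs.form !mul0mx mxE. Qed.
Lemma form0r z : fm z 0 = 0.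
Proof. by rewrite formC form0l. Qed.
Lemma formNl x z : fm (- x) z = - fm x z.
Proof. by rewrite -scaleN1r formZl mulN1r. Qed.
Lemma formNr x z : fm z (- x) = - fm z x.
Proof. by rewrite -scaleN1r formZr mulN1r. Qed.
Lemma formBl x y z : fm (x - y) z = fm x z - fm y z.
Proof. by rewrite formDl formNl. Qed.
Lemma formBr x y z : fm z (x - y) = fm z x - fm z y.
Proof. by rewrite formDr formNr. Qed.
Lemma form_suml I (s : seq I) (P : pred I) F z :
  fm (\sum_(i <- s | P i) F i) z = \sum_(i <- s | P i) fm (F i) z.
Proof. by apply: (big_morph (fm^~ z)); [move=> x y; exact: formDl | exact: form0l]. Qed.
Lemma form_sumr I (s : seq I) (P : pred I) F z :
  fm z (\sum_(i <- s | P i) F i) = \sum_(i <- s | P i) fm z (F i).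
Proof. by apply: (big_morph (fm z)); [move=> x y; exact: formDr | exact: form0r]. Qed.

Lemma form_delta v j : fm v (delta_mx 0 j) = (v *m G) 0 j.
Proof. by rewrite /Defs.form trmx_delta -colE mxE. Qed.

Lemma nondeg v : (forall w, fm v w = 0) -> v = 0.
Proof.
move=> H; have vG0 : v *m G = 0.
  by apply/rowP => j; rewrite -form_delta H mxE.
by rewrite -(mulmxK Gu v) vG0 mul0mx.
Qed.


Lemma fm_mx x y : fm x y = (x *m (G *m y^T)) 0 0.
Proof. by rewrite /Defs.form mulmxA. Qed.

Lemma mx11_eq0 (M : 'M[R]_1) : (M == 0) = (M 0 0 == 0).
Proof.
apply/eqP/eqP => [->|H]; first by rewrite mxE.
by apply/matrixP => i j; rewrite !ord1 H mxE.
Qed.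

Lemma sub_ker x v : (x <= kermx (G *m v^T))%MS = (fm x v == 0).
Proof. by apply/sub_kermxP/eqP => H; [rewrite fm_mx H mxE | apply/eqP; rewrite mx11_eq0 -fm_mx H]. Qed.

Lemma normalize v : fm v v != 0 ->
  let w := (Num.sqrt `|fm v v|)^-1 *: v in fm w w = 1 \/ fm w w = -1.
Proof.
move=> Nv0 /=; rewrite formZl formZr mulrA -expr2 exprVn sqr_sqrtr ?normr_ge0 //.
case: (ltgtP (fm v v) 0) => [Nlt|Ngt|Neq]; last by rewrite Neq eqxx in Nv0.
- by right; rewrite ltr0_norm // invrN mulNr mulVf.
- by left; rewrite gtr0_norm // mulVf // gt_eqF.
Qed.

Definition pm1 (a : R) := a = 1 \/ a = -1.

Lemma pm1_sq a : pm1 a -> a * a = 1.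
Proof. by case=> ->; rewrite ?mulr1 ?mulrNN ?mulr1. Qed.

Lemma GS k : forall W : 'M[R]_n, (\rank W <= k)%N -> exists s : seq 'rV[R]_n,
  [/\ uniq s, (forall x, x \in s -> (x <= W)%MS /\ pm1 (fm x x)),
      (forall x y, x \in s -> y \in s -> x != y -> fm x y = 0)
    & (forall x w, (x <= W)%MS -> (w <= W)%MS ->
         fm x w = \sum_(t <- s) fm t t * (fm x t * fm t w))].
Proof.
elim: k => [|k IH] W rk.
  have W0 : W = 0 by apply/eqP; rewrite -mxrank_eq0 -leqn0.
  exists [::]; split => // x w; rewrite W0 submx0 => /eqP -> _.
  by rewrite form0l big_nil.
case: (classic (exists v, (v <= W)%MS /\ fm v v != 0)) => [[v0 [v0W Nv0]]|nov].
- set c := (Num.sqrt `|fm v0 v0|)^-1.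
  set v := c *: v0.
  have pv : pm1 (fm v v) by exact: normalize.
  have vW : (v <= W)%MS by rewrite scalemx_sub.
  have Nv : fm v v != 0 by case: pv => ->; rewrite ?oppr_eq0 oner_eq0.
  clearbody v.
  set W' := (W :&: kermx (G *m v^T))%MS.
  have inW' x : (x <= W')%MS = (x <= W)%MS && (fm x v == 0).
    by rewrite sub_capmx sub_ker.
  have W'W : (W' <= W)%MS by exact: capmxSl.
  have ltW : (W' < W)%MS.
    rewrite ltmxE W'W /=; apply/negP => WW'.
    have := submx_trans vW WW'; rewrite inW' => /andP[_]; by rewrite (negbTE Nv).
  have rk' : (\rank W' <= k)%N.
    move: ltW; rewrite ltmxErank => /andP[_ lt]; exact: leq_trans lt rk.
  have [s' [us' ins' orth' pars']] := IH W' rk'.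
  have s'v t : t \in s' -> fm t v = 0.
    by move=> /ins' [+ _]; rewrite inW' => /andP[_ /eqP].
  exists (v :: s'); split.
  + rewrite /= us' andbT; apply/negP => /s'v H; by rewrite H eqxx in Nv.
  + move=> x; rewrite inE => /orP[/eqP ->|xs]; first by split.
    by have [xW' px] := ins' x xs; split => //; exact: submx_trans xW' W'W.
  + move=> x y; rewrite !inE => /orP[/eqP ->|xs] /orP[/eqP ->|ys]; rewrite ?eqxx //.
    * by move=> _; rewrite formC s'v.
    * by move=> _; rewrite s'v.
    * exact: orth'.
  + move=> x w xW wW; rewrite big_cons.
    set e := fm v v.
    set x' := x - (fm x v * e) *: v.
    set w' := w - (fm w v * e) *: v.
    have ee : e * e = 1 by exact: pm1_sq.
    have x'v : fm x' v = 0 by rewrite formBl formZl -/e -mulrA ee mulr1 subrr.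
    have w'v : fm w' v = 0 by rewrite formBl formZl -/e -mulrA ee mulr1 subrr.
    have x'W : (x' <= W')%MS by rewrite inW' x'v eqxx andbT addmx_sub // eqmx_opp scalemx_sub.
    have w'W : (w' <= W')%MS by rewrite inW' w'v eqxx andbT addmx_sub // eqmx_opp scalemx_sub.
    have E : \sum_(t <- s') fm t t * (fm x' t * fm t w') =
             \sum_(t <- s') fm t t * (fm x t * fm t w).
      apply: eq_big_seq => t ts; rewrite /x' /w' formBl formBr !formZl !formZr.
      by rewrite (formC v t) (s'v t ts) !mulr0 !subr0.
    rewrite -E -pars' //.
    have -> : fm x w = fm (x' + (fm x v * e) *: v) (w' + (fm w v * e) *: v).
      by rewrite /x' /w' !subrK.
    clearbody x' w'.
    rewrite formDl !formDr !formZl !formZr x'v (formC v w') w'v -/e (formC v w).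
    rewrite !mulr0 !add0r.
    have -> : fm x v * e * (fm w v * e * e) = fm x v * fm w v * (e * e) * e by ring.
    by rewrite ee; ring.
- exists [::]; split => // x w xW wW; rewrite big_nil.
  have z u : (u <= W)%MS -> fm u u = 0.
    move=> uW; case: (eqVneq (fm u u) 0) => // H; exfalso; apply: nov; by exists u.
  have := z (x + w) (addmx_sub xW wW).
  rewrite formDl !formDr z // z // (formC w x) add0r addr0 => /eqP.
  rewrite -mulr2n -mulr_natr mulf_eq0 pnatr_eq0 orbF => /eqP //.
Qed.


Lemma one_neq_m1 : (1:R) <> -1. Proof. lra. Qed.

Definition frame_props (f g : seq 'rV[R]_n) :=
  [/\ forall i j, (i < size f)%N -> (j < size f)%N ->
        fm (nth 0 f i) (nth 0 f j) = - (i == j)%:R,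
      forall i j, (i < size g)%N -> (j < size g)%N ->
        fm (nth 0 g i) (nth 0 g j) = (i == j)%:R,
      forall i j, (i < size f)%N -> (j < size g)%N ->
        fm (nth 0 f i) (nth 0 g j) = 0
    & forall x w, fm x w =
        - (\sum_(i < size f) fm x (nth 0 f i) * fm (nth 0 f i) w)
        + \sum_(k < size g) fm x (nth 0 g k) * fm (nth 0 g k) w].

Lemma frame_exists : exists f g, frame_props f g.
Proof.
have [s [us ins orth pars]] := GS (leqnn (\rank (1%:M : 'M[R]_n))).
set f := [seq t <- s | fm t t < 0]; set g := [seq t <- s | ~~ (fm t t < 0)].
have fneg t : t \in f -> fm t t = -1.
  rewrite mem_filter => /andP[lt ts]; have [_ [E|E]] := ins t ts => //.
  by rewrite E ltr10 in lt.
have gpos t : t \in g -> fm t t = 1.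
  rewrite mem_filter => /andP[lt ts]; have [_ [E|E]] := ins t ts => //.
  by rewrite E ltrN10 in lt.
have fs t : t \in f -> t \in s by rewrite mem_filter => /andP[].
have gs t : t \in g -> t \in s by rewrite mem_filter => /andP[].
have uf : uniq f by exact: filter_uniq.
have ug : uniq g by exact: filter_uniq.
exists f, g; split.
- move=> i j ilt jlt; case: (eqVneq i j) => [->|ij].
    by rewrite fneg ?mem_nth.
  have ne : nth 0 f i != nth 0 f j by rewrite nth_uniq.
  by rewrite orth ?fs ?mem_nth // oppr0.
- move=> i j ilt jlt; case: (eqVneq i j) => [->|ij].
    by rewrite gpos ?mem_nth.
  have ne : nth 0 g i != nth 0 g j by rewrite nth_uniq.
  by rewrite orth ?gs ?mem_nth.
- move=> i j ilt jlt; apply: orth; [exact: fs (mem_nth 0 ilt) | exact: gs (mem_nth 0 jlt) |].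
  apply/eqP => E; have h1 := fneg _ (mem_nth 0 ilt); have h2 := gpos _ (mem_nth 0 jlt).
  by rewrite E h2 in h1; apply: one_neq_m1.
- move=> x w; rewrite (pars x w) ?submx1 // (bigID (fun t : 'rV[R]_n => (fm t t < 0)%R)) /=.
  rewrite -[X in X + _ = _]big_filter -[X in _ + X = _]big_filter -/f -/g.
  rewrite [X in X + _ = _](big_nth 0) [X in _ + X = _](big_nth 0) !big_mkord.
  rewrite -sumrN; congr (_ + _); apply: eq_bigr => i _.
    by rewrite fneg ?mem_nth // mulN1r.
  by rewrite gpos ?mem_nth // mul1r.
Qed.

End Form.

Section Tensor.
Variable R : realType.
Variable n : nat.

Lemma form_sum (S : 'M[R]_n) x y :
  Defs.form S x y = \sum_i \sum_j x 0 i * S i j * y 0 j.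
Proof.
rewrite /Defs.form mxE.
rewrite (eq_bigr (fun j => \sum_i x 0 i * S i j * y 0 j)); last first.
  by move=> j _; rewrite !mxE mulr_suml; apply: eq_bigr => i _; rewrite ?mxE.
by rewrite exchange_big.
Qed.

Lemma tev_lin (T1 T2 : tensor4 R n) a b x y z w :
  tev (fun i j k l => a * T1 i j k l + b * T2 i j k l) x y z w
  = a * tev T1 x y z w + b * tev T2 x y z w.
Proof.
rewrite /tev !mulr_sumr -big_split; apply: eq_bigr => i _.
rewrite !mulr_sumr -big_split; apply: eq_bigr => j _.
rewrite !mulr_sumr -big_split; apply: eq_bigr => k _.
rewrite !mulr_sumr -big_split; apply: eq_bigr => l _.
by rewrite /= !mulrDl -!mulrA.
Qed.

Lemma tev_prod1 (A B : 'M[R]_n) x y z w :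
  tev (fun i j k l => A j k * B i l) x y z w = Defs.form A y z * Defs.form B x w.
Proof.
rewrite !form_sum big_distrlr /= exchange_big /=.
apply: eq_bigr => i _; apply: eq_bigr => j _.
rewrite big_distrlr /=; apply: eq_bigr => k _; apply: eq_bigr => l _.
ring.
Qed.

Lemma tev_prod2 (A B : 'M[R]_n) x y z w :
  tev (fun i j k l => A i k * B j l) x y z w = Defs.form A x z * Defs.form B y w.
Proof.
rewrite !form_sum big_distrlr /=.
apply: eq_bigr => i _; apply: eq_bigr => j _.
rewrite big_distrlr /=; apply: eq_bigr => k _; apply: eq_bigr => l _.
ring.
Qed.

Definition RT (S : 'M[R]_n) : tensor4 R n :=
  fun i j k l => 1 * (S j k * S i l) + (-1) * (S i k * S j l).
Definition mkT (S1 S2 : 'M[R]_n) : tensor4 R n :=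
  fun i j k l => 1 * RT S1 i j k l + 1 * RT S2 i j k l.

Lemma tev_RT S x y z w : tev (RT S) x y z w =
  Defs.form S y z * Defs.form S x w - Defs.form S x z * Defs.form S y w.
Proof.
rewrite /RT (tev_lin (fun i j k l => S j k * S i l) (fun i j k l => S i k * S j l)).
by rewrite tev_prod1 tev_prod2; ring.
Qed.

Lemma tev_mkT S1 S2 x y z w : tev (mkT S1 S2) x y z w =
  tev (RT S1) x y z w + tev (RT S2) x y z w.
Proof. by rewrite /mkT tev_lin !mul1r. Qed.


Lemma RT_act (S : 'M[R]_n) : S^T = S -> forall x y z w,
  [/\ tev (RT S) x y z w = tev (RT S) z w x y,
      tev (RT S) x y z w = - tev (RT S) y x z w
    & tev (RT S) x y z w + tev (RT S) y z x w + tev (RT S) z x y w = 0].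
Proof.
move=> Ss x y z w; rewrite !tev_RT.
rewrite ?(formC Ss y x) ?(formC Ss z y) ?(formC Ss z x) ?(formC Ss w x) ?(formC Ss w y) ?(formC Ss w z).
split; ring.
Qed.

Lemma mkT_act (S1 S2 : 'M[R]_n) : S1^T = S1 -> S2^T = S2 -> is_act (mkT S1 S2).
Proof.
move=> s1 s2 x y z w; rewrite !tev_mkT.
have [a1 b1 c1] := RT_act s1 x y z w.
have [a2 b2 c2] := RT_act s2 x y z w.
split; first by rewrite a1 a2.
  by rewrite b1 b2 opprD.
have E (a b c d e f : R) : (a + d) + (b + e) + (c + f) = (a + b + c) + (d + e + f).
  by ring.
by rewrite E c1 c2 addr0.
Qed.

End Tensor.

Section Rank.
Variable R : realType.
Variable n : nat.

Definition mk4 (u0 u1 u2 u3 : 'rV[R]_n) : 'M[R]_(4, n) :=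
  \matrix_(i < 4, l < n) (nth 0 [:: u0; u1; u2; u3] i) 0 l.

Definition i1 : 'I_4 := lift ord0 (ord0 : 'I_3).
Definition i2 : 'I_4 := lift ord0 (lift ord0 (ord0 : 'I_2)).
Definition i3 : 'I_4 := lift ord0 (lift ord0 (lift ord0 (ord0 : 'I_1))).

Lemma mk4_mul (v : 'rV[R]_4) u0 u1 u2 u3 :
  v *m mk4 u0 u1 u2 u3 = v 0 ord0 *: u0 + v 0 i1 *: u1 + v 0 i2 *: u2 + v 0 i3 *: u3.
Proof.
apply/rowP => l; rewrite !mxE !big_ord_recl big_ord0 !mxE /=.
by rewrite addr0 !addrA.
Qed.

Lemma rV4_eq0 (v : 'rV[R]_4) :
  v 0 ord0 = 0 -> v 0 i1 = 0 -> v 0 i2 = 0 -> v 0 i3 = 0 -> v = 0.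
Proof.
move=> h0 h1 h2 h3; apply/rowP => i; rewrite mxE.
case: i => [[|[|[|[|m]]]] Hm] //.
- by rewrite -h0; congr (v 0 _); apply: val_inj.
- by rewrite -h1; congr (v 0 _); apply: val_inj.
- by rewrite -h2; congr (v 0 _); apply: val_inj.
- by rewrite -h3; congr (v 0 _); apply: val_inj.
Qed.

Lemma mk4_free u0 u1 u2 u3 :
  (forall a b c d : R, a *: u0 + b *: u1 + c *: u2 + d *: u3 = 0 ->
     [/\ a = 0, b = 0, c = 0 & d = 0]) ->
  row_free (mk4 u0 u1 u2 u3).
Proof.
move=> H; rewrite -kermx_eq0 -submx0; apply/rV_subP => v /sub_kermxP.
rewrite mk4_mul => /H [h0 h1 h2 h3]; by rewrite (rV4_eq0 h0 h1 h2 h3) sub0mx.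
Qed.

Lemma mk4_notfree u0 u1 u2 u3 (a b c d : R) :
  a *: u0 + b *: u1 + c *: u2 + d *: u3 = 0 ->
  ~ [/\ a = 0, b = 0, c = 0 & d = 0] ->
  ~~ row_free (mk4 u0 u1 u2 u3).
Proof.
move=> E nz; apply/negP => fr.
set v : 'rV[R]_4 := \row_(i < 4) nth 0 [:: a; b; c; d] i.
have : v *m mk4 u0 u1 u2 u3 = 0 by rewrite mk4_mul !mxE.
move/eqP; rewrite (mulmx_free_eq0 _ fr) => /eqP v0; apply: nz.
have e i : v 0 i = 0 by rewrite v0 mxE.
by move: (e ord0) (e i1) (e i2) (e i3); rewrite !mxE /=.
Qed.

Definition lin4 (S1 S2 : 'M[R]_n) (x y : 'rV[R]_n) (a b c d : R) :=
  a *: (x *m S1) + b *: (y *m S1) + c *: (x *m S2) + d *: (y *m S2).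

Lemma curv_opE G S1 S2 x y :
  curv_op G (mkT S1 S2) x y =
  ((mk4 (x *m S1) (y *m S1) (x *m S2) (y *m S2))^T *m
    mk4 (- (y *m S1)) (x *m S1) (- (y *m S2)) (x *m S2)) *m invmx G.
Proof.
rewrite /curv_op; congr (_ *m _); apply/matrixP => k l.
rewrite !mxE tev_mkT !tev_RT !big_ord_recl big_ord0 !mxE /=.
rewrite !form_delta !mxE; ring.
Qed.

Lemma plane_rank4 G S1 S2 x y :
  G \in unitmx ->
  (forall a b c d, lin4 S1 S2 x y a b c d = 0 -> [/\ a = 0, b = 0, c = 0 & d = 0]) ->
  (Num.sqrt `|Defs.form G x x * Defs.form G y y - Defs.form G x y ^+ 2|)^-1 != 0 ->
  \rank (plane_op G (mkT S1 S2) x y) = 4%N.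
Proof.
move=> Gu H cn0; rewrite /plane_op mxrank_scale_nz // curv_opE.
rewrite mxrankMfree; last by rewrite row_free_unit unitmx_inv.
have fC : row_free (mk4 (x *m S1) (y *m S1) (x *m S2) (y *m S2)) by exact: mk4_free.
rewrite mxrankMfree ?mxrank_tr; first by move/eqP: fC.
apply: mk4_free => a b c d E.
have E' : lin4 S1 S2 x y b (- a) d (- c) = 0.
  by rewrite -E; apply/rowP => l; rewrite !mxE; ring.
have [hb ha hd hc] := H _ _ _ _ E'.
by split => //; [move/eqP: ha | move/eqP: hc]; rewrite oppr_eq0 => /eqP.
Qed.

Lemma plane_rank_not4 G S1 S2 x y (a b c d : R) :
  lin4 S1 S2 x y a b c d = 0 -> ~ [/\ a = 0, b = 0, c = 0 & d = 0] ->
  \rank (plane_op G (mkT S1 S2) x y) != 4%N.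
Proof.
move=> E nz; have nf := mk4_notfree E nz.
apply: contraNneq nf => rk; rewrite /row_free; apply/eqP/anti_leq.
rewrite rank_leq_row /= -[X in (X <= _)%N]rk /plane_op curv_opE.
apply: leq_trans (mxrank_scale _ _) _.
apply: leq_trans (mxrankM_maxl _ _) _.
apply: leq_trans (mxrankM_maxl _ _) _.
by rewrite mxrank_tr.
Qed.

End Rank.

Lemma sum_delta (R : realType) (m i : nat) (F : nat -> R) :
  \sum_(k < m) F k * (k == i :> nat)%:R = if (i < m)%N then F i else 0.
Proof.
elim: m => [|m IH]; first by rewrite big_ord0.
rewrite big_ord_recr /= IH ltnS.
case: (ltngtP i m) => [lt|gt|->].
- by rewrite mulr0 addr0.
- by rewrite mulr0 addr0.
- by rewrite mulr1 add0r.
Qed.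

Section Main.
Variable R : realType.
Variable n : nat.
Variable G : 'M[R]_n.
Hypothesis Gsym : G^T = G.
Hypothesis Gu : G \in unitmx.
Variables f g : seq 'rV[R]_n.
Hypothesis Hfr : frame_props G f g.
Hypothesis qp : (size g <= size f)%N.

Local Notation fm := (@Defs.form R n G).
Local Notation fi i := (nth 0 f i).
Local Notation gi i := (nth 0 g i).

Definition S2 : 'M[R]_n :=
  \sum_(k < size g) (G *m (gi k)^T *m fi k *m G + G *m (fi k)^T *m gi k *m G).

Lemma form_outer (a b x z : 'rV[R]_n) :
  Defs.form (G *m a^T *m b *m G) x z = fm x a * fm b z.
Proof.
rewrite /Defs.form !mulmxA.
have -> : x *m G *m a^T *m b *m G *m z^T = (x *m G *m a^T) *m (b *m G *m z^T).
  by rewrite !mulmxA.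
by rewrite mxE big_ord1.
Qed.

Lemma formS2 x z : Defs.form S2 x z =
  \sum_(k < size g) (fm x (gi k) * fm (fi k) z + fm x (fi k) * fm (gi k) z).
Proof.
rewrite /Defs.form /S2 mulmx_sumr mulmx_suml summxE; apply: eq_bigr => k _.
by rewrite mulmxDr mulmxDl mxE -!/(Defs.form _ _ _) !form_outer.
Qed.

Lemma S2sym : S2^T = S2.
Proof.
rewrite /S2 raddf_sum; apply: eq_bigr => k _.
by rewrite raddfD /= !trmx_mul !trmxK Gsym !mulmxA addrC.
Qed.

Lemma S2_f v i : (i < size f)%N ->
  Defs.form S2 v (fi i) = if (i < size g)%N then - fm v (gi i) else 0.
Proof.
have [HF HG HFG HP] := Hfr.
move=> ilt; rewrite formS2.
rewrite (eq_bigr (fun k : 'I_(size g) => - fm v (gi k) * (k == i :> nat)%:R)).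
  by rewrite (sum_delta _ _ (fun k => - fm v (gi k))).
move=> k _; rewrite HF ?(leq_trans (ltn_ord k)) // (formC Gsym (gi k)) HFG //.
by rewrite mulr0 addr0 mulrN mulNr.
Qed.

Lemma S2_g v k : (k < size g)%N -> Defs.form S2 v (gi k) = fm v (fi k).
Proof.
have [HF HG HFG HP] := Hfr.
move=> klt; rewrite formS2.
rewrite (eq_bigr (fun j : 'I_(size g) => fm v (fi j) * (j == k :> nat)%:R)).
  by rewrite (sum_delta _ _ (fun j => fm v (fi j))) klt.
move=> j _; rewrite HG // HFG ?(leq_trans (ltn_ord j)) //.
by rewrite mulr0 add0r.
Qed.

Lemma quadP x : fm x x =
  - (\sum_(i < size f) fm x (fi i) ^+ 2) + \sum_(k < size g) fm x (gi k) ^+ 2.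
Proof.
have [HF HG HFG HP] := Hfr.
rewrite {1}HP; congr (- _ + _); apply: eq_bigr => i _; by rewrite expr2 (formC Gsym _ x).
Qed.

Lemma core u v : (forall z, fm u z = - Defs.form S2 v z) ->
  fm u u + fm v v =
  - \sum_(i < size f | ~~ (i < size g)%N) fm v (fi i) ^+ 2.
Proof.
move=> Huv; rewrite !quadP.
have e1 : \sum_(i < size f) fm u (fi i) ^+ 2 = \sum_(k < size g) fm v (gi k) ^+ 2.
  rewrite (big_ord_widen _ (fun i => fm v (gi i) ^+ 2) qp) [RHS]big_mkcond /=.
  apply: eq_bigr => i _; rewrite Huv S2_f //.
  by case: ifP => _; rewrite ?sqrrN ?oppr0 ?expr0n.
have e2 : \sum_(k < size g) fm u (gi k) ^+ 2 = \sum_(k < size g) fm v (fi k) ^+ 2.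
  by apply: eq_bigr => k _; rewrite Huv S2_g // sqrrN.
have e3 : \sum_(k < size g) fm v (fi k) ^+ 2 =
          \sum_(i < size f | (i < size g)%N) fm v (fi i) ^+ 2.
  exact: (big_ord_widen _ (fun i => fm v (fi i) ^+ 2) qp).
have e4 : \sum_(i < size f) fm v (fi i) ^+ 2 =
   \sum_(i < size f | (i < size g)%N) fm v (fi i) ^+ 2 +
   \sum_(i < size f | ~~ (i < size g)%N) fm v (fi i) ^+ 2.
  exact: (bigID (fun i : 'I_(size f) => (i < size g)%N)).
rewrite e1 e2 e3 e4; ring.
Qed.

End Main.

Section Planes.
Variable R : realType.
Variable n : nat.
Variable G : 'M[R]_n.
Hypothesis Gsym : G^T = G.

Local Notation fm := (@Defs.form R n G).

Lemma quad2 a b e1 e2 : fm (a *: e1 + b *: e2) (a *: e1 + b *: e2) =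
  a ^+ 2 * fm e1 e1 + 2%:R * a * b * fm e1 e2 + b ^+ 2 * fm e2 e2.
Proof.
rewrite !formDl !(formDr Gsym) !formZl !(formZr Gsym) (formC Gsym e2 e1); ring.
Qed.

Definition r2 (a b : R) : 'rV[R]_2 := \row_(i < 2) (if i == 0 :> nat then a else b).

Lemma gram_quad e1 e2 a b :
  Defs.form (gram2 G e1 e2) (r2 a b) (r2 a b) = fm (a *: e1 + b *: e2) (a *: e1 + b *: e2).
Proof.
rewrite quad2 form_sum !big_ord_recl !big_ord0 !mxE /= (formC Gsym e2 e1); ring.
Qed.

Lemma r2_eq0 a b : (r2 a b == 0) = (a == 0) && (b == 0).
Proof.
apply/eqP/andP => [E|[/eqP -> /eqP ->]].
  have e0 := congr1 (fun M : 'rV[R]_2 => M 0 0) E.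
  have e1 := congr1 (fun M : 'rV[R]_2 => M 0 (lift ord0 ord0)) E.
  by move: e0 e1; rewrite !mxE /= => -> ->.
by apply/rowP => i; rewrite !mxE; case: ifP.
Qed.

Lemma spacelike_pos e1 e2 : spacelike G e1 e2 -> forall a b,
  (a != 0) || (b != 0) -> 0 < fm (a *: e1 + b *: e2) (a *: e1 + b *: e2).
Proof.
move=> [_ [_ _ _ [[U [pU rU]] _]]] a b nz.
rewrite -gram_quad; apply: pU; first by apply: submx_full; rewrite /row_full rU.
by rewrite r2_eq0 negb_and.
Qed.

Lemma timelike_neg e1 e2 : timelike G e1 e2 -> forall a b,
  (a != 0) || (b != 0) -> fm (a *: e1 + b *: e2) (a *: e1 + b *: e2) < 0.
Proof.
move=> [_ [_ _ [[U [pU rU]] _] _]] a b nz.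
rewrite -gram_quad; apply: pU; first by apply: submx_full; rewrite /row_full rU.
by rewrite r2_eq0 negb_and.
Qed.

Lemma scal_nz e1 e2 :
  (forall a b, (a != 0) || (b != 0) -> fm (a *: e1 + b *: e2) (a *: e1 + b *: e2) != 0) ->
  (Num.sqrt `|fm e1 e1 * fm e2 e2 - fm e1 e2 ^+ 2|)^-1 != 0.
Proof.
move=> H; rewrite invr_eq0 sqrtr_eq0 normr_le0.
have f22 : fm e2 e2 != 0.
  have := H 0 1; rewrite oner_eq0 orbT => /(_ isT).
  by rewrite scale0r add0r scale1r.
apply/negP => /eqP D0.
have := H (fm e2 e2) (- fm e1 e2); rewrite f22 => /(_ isT).
rewrite quad2.
have -> : fm e2 e2 ^+ 2 * fm e1 e1 + 2%:R * fm e2 e2 * - fm e1 e2 * fm e1 e2 +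
  (- fm e1 e2) ^+ 2 * fm e2 e2 = fm e2 e2 * (fm e1 e1 * fm e2 e2 - fm e1 e2 ^+ 2) by ring.
by rewrite D0 mulr0 eqxx.
Qed.

End Planes.

Section Wit.
Variable R : realType.
Variable n : nat.
Variable G : 'M[R]_n.
Hypothesis Gsym : G^T = G.

Local Notation fm := (@Defs.form R n G).

Lemma r2E (v : 'rV[R]_2) : v = r2 (v 0 0) (v 0 (lift ord0 ord0)).
Proof.
apply/rowP => i; rewrite mxE; case: i => [[|[|m]] Hm] //=.
- by congr (v 0 _); apply: val_inj.
- by congr (v 0 _); apply: val_inj.
Qed.

Lemma rank_col2 e1 e2 (s1 s2 : R) : fm e1 e1 = s1 -> fm e2 e2 = s2 -> fm e1 e2 = 0 ->
  s1 != 0 -> s2 != 0 -> \rank (col_mx e1 e2) = 2%N.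
Proof.
move=> h1 h2 h12 n1 n2; apply/eqP; rewrite -/(row_free _) -kermx_eq0 -submx0.
apply/rV_subP => v /sub_kermxP; rewrite -[v]hsubmxK mul_row_col.
rewrite [lsubmx v]mx11_scalar [rsubmx v]mx11_scalar !mul_scalar_mx.
set a := lsubmx v 0 0; set b := rsubmx v 0 0 => E.
have ea := congr1 (fun x => fm x e1) E; have eb := congr1 (fun x => fm x e2) E.
move: ea eb; rewrite /= !formDl !formZl !form0l (formC Gsym e2 e1) h1 h2 h12.
rewrite !mulr0 addr0 add0r => /eqP; rewrite mulf_eq0 (negbTE n1) orbF => /eqP a0.
move=> /eqP; rewrite mulf_eq0 (negbTE n2) orbF => /eqP b0.
by rewrite a0 b0 raddf0 row_mx0 sub0mx.
Qed.

Lemma gram_sym e1 e2 : (gram2 G e1 e2)^T = gram2 G e1 e2.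
Proof. by apply/matrixP => i j; rewrite !mxE formC. Qed.

Lemma gram_unit e1 e2 (s1 s2 : R) : fm e1 e1 = s1 -> fm e2 e2 = s2 -> fm e1 e2 = 0 ->
  s1 * s1 = 1 -> s2 * s2 = 1 -> gram2 G e1 e2 \in unitmx.
Proof.
move=> h1 h2 h12 q1 q2.
suff: gram2 G e1 e2 *m gram2 G e1 e2 = 1%:M by case/mulmx1_unit.
apply/matrixP => i j; rewrite !mxE !big_ord_recl big_ord0 !mxE /=.
case: i => [[|[|m]] Hm] //; case: j => [[|[|m']] Hm'] //=;
  rewrite ?(formC Gsym e2 e1) ?h1 ?h2 ?h12 ?mulr0 ?mul0r ?addr0 ?add0r ?q1 ?q2 //.
Qed.

Lemma gram_val e1 e2 (s1 s2 : R) : fm e1 e1 = s1 -> fm e2 e2 = s2 -> fm e1 e2 = 0 ->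
  forall v, Defs.form (gram2 G e1 e2) v v =
    v 0 0 ^+ 2 * s1 + v 0 (lift ord0 ord0) ^+ 2 * s2.
Proof.
move=> h1 h2 h12 v; rewrite [v]r2E gram_quad // quad2 // h1 h2 h12 !mxE /=; ring.
Qed.

Lemma r2_nz (v : 'rV[R]_2) : v != 0 -> (v 0 0 != 0) || (v 0 (lift ord0 ord0) != 0).
Proof. by rewrite {1}[v]r2E r2_eq0 negb_and. Qed.

Lemma sq_pos (a : R) : a != 0 -> 0 < a ^+ 2.
Proof. by move=> a0; rewrite exprn_even_gt0. Qed.


Definition o1 : 'I_2 := lift ord0 (ord0 : 'I_1).

Lemma sub_delta00 (v : 'rV[R]_2) : (v <= (delta_mx 0 0 : 'M[R]_2))%MS -> v 0 o1 = 0.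
Proof.
case/submxP => D ->; rewrite !mxE !big_ord_recl big_ord0 !mxE /=.
by rewrite !mulr0 !addr0.
Qed.

Lemma sub_delta11 (v : 'rV[R]_2) : (v <= (delta_mx o1 o1 : 'M[R]_2))%MS -> v 0 0 = 0.
Proof.
case/submxP => D ->; rewrite !mxE !big_ord_recl big_ord0 !mxE /=.
by rewrite !mulr0 !addr0.
Qed.

Lemma full2 (U : 'M[R]_2) (v : 'rV[R]_2) : \rank U = 2%N -> (v <= U)%MS.
Proof. by move=> rU; apply: submx_full; rewrite /row_full rU. Qed.

Lemma rank_le1 (U : 'M[R]_2) : \rank U <> 2%N -> (\rank U <= 1)%N.
Proof. by have := rank_leq_row U; case: (\rank U) => [|[|[|]]]. Qed.

Lemma mixed_wit e1 e2 : fm e1 e1 = -1 -> fm e2 e2 = 1 -> fm e1 e2 = 0 -> mixed G e1 e2.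
Proof.
move=> h1 h2 h12.
have vE := gram_val h1 h2 h12.
split; first by apply: (rank_col2 h1 h2 h12); rewrite ?oppr_eq0 oner_eq0.
split; first exact: gram_sym.
- by apply: (gram_unit h1 h2 h12); rewrite ?mulrNN mulr1.
- split.
    exists (delta_mx 0 0); split; last exact: mxrank_delta.
    move=> v vU vnz; rewrite vE.
    have v1 := sub_delta00 vU; rewrite -/o1 v1 expr0n mul0r addr0 mulrN1 oppr_lt0.
    apply: sq_pos; have := r2_nz vnz; by rewrite -/o1 v1 eqxx orbF.
  move=> U nU; apply: rank_le1 => rU.
  have := nU (r2 0 1) (full2 _ rU); rewrite r2_eq0 eqxx oner_eq0 /= => /(_ isT).
  by rewrite vE !mxE /= expr0n mul0r add0r expr1n mulr1 ltr10.
- split.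
    exists (delta_mx o1 o1); split; last exact: mxrank_delta.
    move=> v vU vnz; rewrite vE.
    have v0 := sub_delta11 vU; rewrite v0 expr0n mul0r add0r mulr1.
    apply: sq_pos; have := r2_nz vnz; by rewrite v0 eqxx.
  move=> U nU; apply: rank_le1 => rU.
  have := nU (r2 1 0) (full2 _ rU); rewrite r2_eq0 eqxx oner_eq0 /= => /(_ isT).
  by rewrite vE !mxE /= expr0n mul0r addr0 expr1n mulrN1 oppr_gt0 ltr10.
Qed.

Lemma timelike_wit e1 e2 : fm e1 e1 = -1 -> fm e2 e2 = -1 -> fm e1 e2 = 0 -> timelike G e1 e2.
Proof.
move=> h1 h2 h12.
have vE := gram_val h1 h2 h12.
have neg v : v != 0 -> Defs.form (gram2 G e1 e2) v v < 0.
  move=> vnz; rewrite vE !mulrN1 -opprD oppr_lt0.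
  case/orP: (r2_nz vnz) => nz.
    by apply: ltr_wpDr; [exact: sqr_ge0 | exact: sq_pos].
  by apply: ltr_wpDl; [exact: sqr_ge0 | exact: sq_pos].
split; first by apply: (rank_col2 h1 h2 h12); rewrite oppr_eq0 oner_eq0.
split; first exact: gram_sym.
- by apply: (gram_unit h1 h2 h12); rewrite mulrNN mulr1.
- split; last by move=> U _; exact: rank_leq_row.
  exists 1%:M; split; last exact: mxrank1.
  by move=> v _; exact: neg.
- split.
    exists 0; split; last exact: mxrank0.
    by move=> v; rewrite submx0 => /eqP ->; rewrite eqxx.
  move=> U pU; suff -> : U = 0 by rewrite mxrank0.
  apply/eqP; rewrite -submx0; apply/rV_subP => v vU; rewrite submx0.
  apply/negPn/negP => vnz; have := pU v vU vnz.
  by rewrite ltNge (ltW (neg v vnz)).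
Qed.

End Wit.

Section Lin.
Variable R : realType.
Variable n : nat.

Lemma rowv_eq0 (w : 'rV[R]_n) : (forall z : 'rV[R]_n, (w *m z^T) 0 0 = 0) -> w = 0.
Proof.
move=> H; apply/rowP => j; have := H (delta_mx 0 j).
by rewrite trmx_delta -colE !mxE.
Qed.

Lemma lin4_z (S1 S2 : 'M[R]_n) x y a b c d z :
  (lin4 S1 S2 x y a b c d *m z^T) 0 0 =
  a * Defs.form S1 x z + b * Defs.form S1 y z + c * Defs.form S2 x z + d * Defs.form S2 y z.
Proof. by rewrite /lin4 /Defs.form !mulmxDl -!scalemxAl !mxE. Qed.

Lemma lin4_pair (S1 S2 : 'M[R]_n) x y a b c d :
  lin4 S1 S2 x y a b c d = 0 -> forall z,
  a * Defs.form S1 x z + b * Defs.form S1 y z + c * Defs.form S2 x z + d * Defs.form S2 y z = 0.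
Proof. by move=> E z; rewrite -lin4_z E mul0mx mxE. Qed.

Lemma pair_lin4 (S1 S2 : 'M[R]_n) x y a b c d :
  (forall z,
  a * Defs.form S1 x z + b * Defs.form S1 y z + c * Defs.form S2 x z + d * Defs.form S2 y z = 0)
  -> lin4 S1 S2 x y a b c d = 0.
Proof. by move=> H; apply: rowv_eq0 => z; rewrite lin4_z H. Qed.

End Lin.

Section Final.
Variable R : realType.
Variable n : nat.
Variable G : 'M[R]_n.
Hypothesis Gsym : G^T = G.
Hypothesis Gu : G \in unitmx.
Variables f g : seq 'rV[R]_n.
Hypothesis Hfr : frame_props G f g.
Hypothesis qp : (size g <= size f)%N.

Local Notation fm := (@Defs.form R n G).
Local Notation S := (S2 G f g).
Local Notation T := (mkT G (S2 G f g)).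

Lemma uv_rel e1 e2 a b c d : lin4 G S e1 e2 a b c d = 0 ->
  forall z, fm (a *: e1 + b *: e2) z = - Defs.form S (c *: e1 + d *: e2) z.
Proof.
move=> E z; have := lin4_pair E z.
rewrite !formDl !formZl => H; apply/eqP; rewrite -subr_eq0 opprK; apply/eqP.
by rewrite -H; ring.
Qed.

Lemma sum_sq_ge0 (F : 'I_(size f) -> R) (P : pred 'I_(size f)) :
  0 <= \sum_(i < size f | P i) F i ^+ 2.
Proof. by apply: sumr_ge0 => i _; exact: sqr_ge0. Qed.

Lemma sp_rank4 e1 e2 : spacelike G e1 e2 -> \rank (plane_op G T e1 e2) = 4%N.
Proof.
move=> sp; have pos := spacelike_pos Gsym sp.
apply: plane_rank4 => //; last first.
  by apply: scal_nz => // a b nz; rewrite gt_eqF // pos.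
move=> a b c d E; have Huv := uv_rel E.
have C := core Gsym Hfr qp Huv.
have nn (x y : R) : (x != 0) || (y != 0) -> 0 < fm (x *: e1 + y *: e2) (x *: e1 + y *: e2).
  exact: pos.
have ge (x y : R) : 0 <= fm (x *: e1 + y *: e2) (x *: e1 + y *: e2).
  case: (boolP ((x != 0) || (y != 0))) => [/nn /ltW //|].
  by rewrite negb_or !negbK => /andP[/eqP -> /eqP ->]; rewrite !scale0r addr0 form0l.
have le0 : fm (a *: e1 + b *: e2) (a *: e1 + b *: e2) + fm (c *: e1 + d *: e2) (c *: e1 + d *: e2) <= 0.
  by rewrite C oppr_le0 sum_sq_ge0.
have z1 : fm (a *: e1 + b *: e2) (a *: e1 + b *: e2) = 0.
  by apply/eqP; rewrite eq_le ge andbT; apply: le_trans le0; rewrite lerDl ge.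
have z2 : fm (c *: e1 + d *: e2) (c *: e1 + d *: e2) = 0.
  by apply/eqP; rewrite eq_le ge andbT; apply: le_trans le0; rewrite lerDr ge.
have ab : (a == 0) && (b == 0).
  by apply/negPn/negP; rewrite negb_and => /nn; rewrite z1 ltxx.
have cd : (c == 0) && (d == 0).
  by apply/negPn/negP; rewrite negb_and => /nn; rewrite z2 ltxx.
by case/andP: ab => /eqP -> /eqP ->; case/andP: cd => /eqP -> /eqP ->.
Qed.

Lemma tl_rank4 e1 e2 : size f = size g -> timelike G e1 e2 -> \rank (plane_op G T e1 e2) = 4%N.
Proof.
move=> fg tl; have neg := timelike_neg Gsym tl.
apply: plane_rank4 => //; last first.
  by apply: scal_nz => // a b nz; rewrite lt_eqF // neg.
move=> a b c d E; have Huv := uv_rel E.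
have C := core Gsym Hfr qp Huv.
have C0 : \sum_(i < size f | ~~ (i < size g)%N) fm (c *: e1 + d *: e2) (nth 0 f i) ^+ 2 = 0.
  by rewrite big1 // => i; rewrite -fg ltn_ord.
rewrite C0 oppr0 in C.
have nn (x y : R) : (x != 0) || (y != 0) -> fm (x *: e1 + y *: e2) (x *: e1 + y *: e2) < 0.
  exact: neg.
have le (x y : R) : fm (x *: e1 + y *: e2) (x *: e1 + y *: e2) <= 0.
  case: (boolP ((x != 0) || (y != 0))) => [/nn /ltW //|].
  by rewrite negb_or !negbK => /andP[/eqP -> /eqP ->]; rewrite !scale0r addr0 form0l.
set A := fm (a *: e1 + b *: e2) _ in C; set B := fm (c *: e1 + d *: e2) _ in C.
have hA : A <= 0 by exact: le.
have hB : B <= 0 by exact: le.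
have z1 : A = 0.
  apply/eqP; rewrite eq_le hA /=; have : 0 <= A + B - B by rewrite C sub0r oppr_ge0.
  by rewrite addrK.
have z2 : B = 0 by move: C; rewrite z1 add0r.
have ab : (a == 0) && (b == 0).
  by apply/negPn/negP; rewrite negb_and => /nn; rewrite -/A z1 ltxx.
have cd : (c == 0) && (d == 0).
  by apply/negPn/negP; rewrite negb_and => /nn; rewrite -/B z2 ltxx.
by case/andP: ab => /eqP -> /eqP ->; case/andP: cd => /eqP -> /eqP ->.
Qed.

End Final.

Section Sizes.
Variable R : realType.
Variable n : nat.
Variable G : 'M[R]_n.
Hypothesis Gsym : G^T = G.
Hypothesis Gu : G \in unitmx.
Variables f g : seq 'rV[R]_n.
Hypothesis Hfr : frame_props G f g.

Local Notation fm := (@Defs.form R n G).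

Definition Hm (h : seq 'rV[R]_n) : 'M[R]_(size h, n) :=
  \matrix_(i < size h, j < n) (nth 0 h i) 0 j.

Lemma Hm_form h (D : 'rV[R]_(size h)) w :
  fm (D *m Hm h) w = \sum_(i < size h) D 0 i * fm (nth 0 h i) w.
Proof.
rewrite mulmx_sum_row form_suml; apply: eq_bigr => i _; rewrite formZl.
by congr (_ * fm _ w); apply/rowP => j; rewrite !mxE.
Qed.

Lemma HmT_entry h (v : 'rV[R]_n) i :
  (v *m (G *m (Hm h)^T)) 0 i = fm v (nth 0 h i).
Proof.
by rewrite mulmxA /Defs.form !mxE; apply: eq_bigr => j _; rewrite !mxE.
Qed.

Lemma sq0 (x : R) : x ^+ 2 = 0 -> x = 0.
Proof. by move/eqP; rewrite sqrf_eq0 => /eqP. Qed.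

Lemma all0_eq0 v : (forall i, (i < size f)%N -> fm v (nth 0 f i) = 0) ->
  (forall k, (k < size g)%N -> fm v (nth 0 g k) = 0) -> v = 0.
Proof.
move=> hf hg; apply: (nondeg Gu) => w; have [_ _ _ HP] := Hfr.
rewrite HP big1 ?oppr0 ?add0r ?big1 // => i _; by rewrite ?hf ?hg ?mul0r.
Qed.

Lemma Hm_free_f : row_free (Hm f).
Proof.
have [HF _ _ _] := Hfr.
rewrite -kermx_eq0 -submx0; apply/rV_subP => D /sub_kermxP E; rewrite submx0.
apply/eqP/rowP => j; rewrite mxE.
have := congr1 (fun x => fm x (nth 0 f j)) E; rewrite /= Hm_form form0l.
rewrite (eq_bigr (fun i : 'I_(size f) => - D 0 i * (i == j :> nat)%:R)); last first.
  by move=> i _; rewrite HF // mulrN mulNr.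
rewrite (bigD1 j) //= big1 ?addr0; last first.
  by move=> i ij; rewrite (_ : (i == j :> nat) = false) ?mulr0 //; exact: negbTE ij.
by rewrite eqxx mulr1 => /eqP; rewrite oppr_eq0 => /eqP.
Qed.


Lemma Hm_free_g : row_free (Hm g).
Proof.
have [_ HG _ _] := Hfr.
rewrite -kermx_eq0 -submx0; apply/rV_subP => D /sub_kermxP E; rewrite submx0.
apply/eqP/rowP => j; rewrite mxE.
have := congr1 (fun x => fm x (nth 0 g j)) E; rewrite /= Hm_form form0l.
rewrite (eq_bigr (fun i : 'I_(size g) => D 0 i * (i == j :> nat)%:R)); last first.
  by move=> i _; rewrite HG.
rewrite (bigD1 j) //= big1 ?addr0; last first.
  by move=> i ij; rewrite (_ : (i == j :> nat) = false) ?mulr0 //; exact: negbTE ij.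
by rewrite eqxx mulr1.
Qed.

Lemma sum_sq_gt0 m (F : 'I_m -> R) : 0 <= \sum_(i < m) F i ^+ 2.
Proof. by apply: sumr_ge0 => i _; exact: sqr_ge0. Qed.

Lemma size_f_le p : (forall U, negdef_sub G U -> (\rank U <= p)%N) -> (size f <= p)%N.
Proof.
have [HF HG HFG HP] := Hfr.
move=> maxN; have := maxN <<Hm f>>%MS.
rewrite mxrank_gen; move/eqP: (Hm_free_f) => ->; apply.
move=> v; rewrite genmxE => /submxP [D ->] vnz.
set v' := D *m Hm f.
have hg k : (k < size g)%N -> fm v' (nth 0 g k) = 0.
  move=> klt; rewrite Hm_form big1 // => i _; by rewrite HFG // mulr0.
rewrite (quadP Gsym Hfr) [X in - _ + X]big1 ?addr0 => [|k _]; last by rewrite hg // expr0n.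
rewrite oppr_lt0 lt_def sum_sq_gt0 andbT; apply/negP => /eqP S0.
have hf i : (i < size f)%N -> fm v' (nth 0 f i) = 0.
  move=> ilt; apply: sq0.
  have := @psumr_eq0P _ _ xpredT (fun i : 'I_(size f) => fm v' (nth 0 f i) ^+ 2) (fun i _ => sqr_ge0 _). by move/(_ S0 (Ordinal ilt) isT).
by move: vnz; rewrite -/v' (all0_eq0 hf hg) eqxx.
Qed.

Lemma size_g_le q : (forall U, posdef_sub G U -> (\rank U <= q)%N) -> (size g <= q)%N.
Proof.
have [HF HG HFG HP] := Hfr.
move=> maxP; have := maxP <<Hm g>>%MS.
rewrite mxrank_gen; move/eqP: (Hm_free_g) => ->; apply.
move=> v; rewrite genmxE => /submxP [D ->] vnz.
set v' := D *m Hm g.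
have hf i : (i < size f)%N -> fm v' (nth 0 f i) = 0.
  move=> ilt; rewrite Hm_form big1 // => k _; by rewrite (formC Gsym) HFG // mulr0.
rewrite (quadP Gsym Hfr) [X in - X + _]big1 ?oppr0 ?add0r => [|i _]; last by rewrite hf // expr0n.
rewrite lt_def sum_sq_gt0 andbT; apply/negP => /eqP S0.
have hg k : (k < size g)%N -> fm v' (nth 0 g k) = 0.
  move=> klt; apply: sq0.
  have := @psumr_eq0P _ _ xpredT (fun i : 'I_(size g) => fm v' (nth 0 g i) ^+ 2) (fun i _ => sqr_ge0 _).
  by move/(_ S0 (Ordinal klt) isT).
by move: vnz; rewrite -/v' (all0_eq0 hf hg) eqxx.
Qed.

Lemma size_f_ge (Um : 'M[R]_n) : negdef_sub G Um -> (\rank Um <= size f)%N.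
Proof.
move=> nUm; rewrite -(mxrank_mul_ker Um (G *m (Hm f)^T)).
suff -> : \rank (Um :&: kermx (G *m (Hm f)^T))%MS = 0%N by rewrite addn0 rank_leq_col.
apply/eqP; rewrite mxrank_eq0 -submx0; apply/rV_subP => v.
rewrite sub_capmx => /andP[vU /sub_kermxP vK]; rewrite submx0.
have hf i : (i < size f)%N -> fm v (nth 0 f i) = 0.
  by move=> ilt; rewrite -(HmT_entry (h:=f) v (Ordinal ilt)) vK mxE.
apply/negPn/negP => vnz; have := nUm v vU vnz.
rewrite (quadP Gsym Hfr) [X in - X + _]big1 ?oppr0 ?add0r => [|i _]; last by rewrite hf // expr0n.
by rewrite ltNge sum_sq_gt0.
Qed.

Lemma size_g_ge (Up : 'M[R]_n) : posdef_sub G Up -> (\rank Up <= size g)%N.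
Proof.
have [HF HG HFG HP] := Hfr.
move=> pUp; rewrite -(mxrank_mul_ker Up (G *m (Hm g)^T)).
suff -> : \rank (Up :&: kermx (G *m (Hm g)^T))%MS = 0%N by rewrite addn0 rank_leq_col.
apply/eqP; rewrite mxrank_eq0 -submx0; apply/rV_subP => v.
rewrite sub_capmx => /andP[vU /sub_kermxP vK]; rewrite submx0.
have hg k : (k < size g)%N -> fm v (nth 0 g k) = 0.
  by move=> klt; rewrite -(HmT_entry (h:=g) v (Ordinal klt)) vK mxE.
apply/negPn/negP => vnz; have := pUp v vU vnz.
rewrite (quadP Gsym Hfr) [X in - _ + X]big1 ?addr0 => [|k _]; last by rewrite hg // expr0n.
by rewrite oppr_gt0 ltNge sum_sq_gt0.
Qed.

End Sizes.

Section Wits.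
Variable R : realType.
Variable n : nat.
Variable G : 'M[R]_n.
Hypothesis Gsym : G^T = G.
Hypothesis Gu : G \in unitmx.
Variables f g : seq 'rV[R]_n.
Hypothesis Hfr : frame_props G f g.
Hypothesis q2 : (2 <= size g)%N.
Hypothesis qp : (size g <= size f)%N.

Local Notation fm := (@Defs.form R n G).
Local Notation S := (S2 G f g).
Local Notation T := (mkT G (S2 G f g)).
Local Notation fi i := (nth 0 f i).
Local Notation gi i := (nth 0 g i).

Lemma phi_f i z : (i < size f)%N ->
  Defs.form S (fi i) z = if (i < size g)%N then - fm (gi i) z else 0.
Proof.
move=> ilt; rewrite (formC (S2sym Gsym f g)) (S2_f Gsym Hfr qp) //.
by case: ifP => // _; rewrite (formC Gsym).
Qed.

Lemma phi_g k z : (k < size g)%N -> Defs.form S (gi k) z = fm (fi k) z.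
Proof.
move=> klt; rewrite (formC (S2sym Gsym f g)) (S2_g Hfr qp) //.
by rewrite (formC Gsym).
Qed.

Lemma opp0 (x : R) : - x = 0 -> x = 0.
Proof. by move/eqP; rewrite oppr_eq0 => /eqP. Qed.

Lemma sg0 : (0 < size g)%N. Proof. exact: leq_trans q2. Qed.
Lemma sg1 : (1 < size g)%N. Proof. exact: q2. Qed.
Lemma sf0 : (0 < size f)%N. Proof. exact: leq_trans sg0 qp. Qed.
Lemma sf1 : (1 < size f)%N. Proof. exact: leq_trans sg1 qp. Qed.

Lemma ff i j : (i < size f)%N -> (j < size f)%N -> fm (fi i) (fi j) = - (i == j)%:R.
Proof. by have [HF _ _ _] := Hfr; exact: HF. Qed.
Lemma gg i j : (i < size g)%N -> (j < size g)%N -> fm (gi i) (gi j) = (i == j)%:R.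
Proof. by have [_ HG _ _] := Hfr; exact: HG. Qed.
Lemma fg i j : (i < size f)%N -> (j < size g)%N -> fm (fi i) (gi j) = 0.
Proof. by have [_ _ HFG _] := Hfr; exact: HFG. Qed.
Lemma gf i j : (i < size g)%N -> (j < size f)%N -> fm (gi i) (fi j) = 0.
Proof. by move=> ilt jlt; rewrite (formC Gsym) fg. Qed.

Lemma scal_val e1 e2 (s1 s2 : R) : fm e1 e1 = s1 -> fm e2 e2 = s2 -> fm e1 e2 = 0 ->
  s1 * s2 != 0 ->
  (Num.sqrt `|fm e1 e1 * fm e2 e2 - fm e1 e2 ^+ 2|)^-1 != 0.
Proof.
move=> -> -> -> nz; rewrite invr_eq0 sqrtr_eq0 normr_le0 expr0n subr0 //.
Qed.

Lemma mixA_not4 : \rank (plane_op G T (fi 0) (gi 0)) != 4%N.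
Proof.
apply: (@plane_rank_not4 _ _ _ _ _ _ _ 0 1 1 0).
  apply: pair_lin4 => z; rewrite phi_f ?sf0 ?sg0 //; ring.
by case=> _ /eqP; rewrite oner_eq0.
Qed.

Lemma mixA : mixed G (fi 0) (gi 0).
Proof.
apply: mixed_wit => //; first by rewrite ff ?sf0.
  by rewrite gg ?sg0.
by rewrite fg ?sf0 ?sg0.
Qed.

Lemma mixB : mixed G (fi 0) (gi 1).
Proof.
apply: mixed_wit => //; first by rewrite ff ?sf0.
  by rewrite gg ?sg1.
by rewrite fg ?sf0 ?sg1.
Qed.

Lemma f00 : fm (fi 0) (fi 0) = -1. Proof. by rewrite ff ?sf0. Qed.
Lemma f11 : fm (fi 1) (fi 1) = -1. Proof. by rewrite ff ?sf1. Qed.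
Lemma f01 : fm (fi 0) (fi 1) = 0. Proof. by rewrite ff ?sf0 ?sf1 // oppr0. Qed.
Lemma f10 : fm (fi 1) (fi 0) = 0. Proof. by rewrite ff ?sf0 ?sf1 // oppr0. Qed.
Lemma g00 : fm (gi 0) (gi 0) = 1. Proof. by rewrite gg ?sg0. Qed.
Lemma g11 : fm (gi 1) (gi 1) = 1. Proof. by rewrite gg ?sg1. Qed.
Lemma g01 : fm (gi 0) (gi 1) = 0. Proof. by rewrite gg ?sg0 ?sg1. Qed.
Lemma g10 : fm (gi 1) (gi 0) = 0. Proof. by rewrite gg ?sg0 ?sg1. Qed.
Lemma fg00 : fm (fi 0) (gi 0) = 0. Proof. by rewrite fg ?sf0 ?sg0. Qed.
Lemma fg01 : fm (fi 0) (gi 1) = 0. Proof. by rewrite fg ?sf0 ?sg1. Qed.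
Lemma fg10 : fm (fi 1) (gi 0) = 0. Proof. by rewrite fg ?sf1 ?sg0. Qed.
Lemma fg11 : fm (fi 1) (gi 1) = 0. Proof. by rewrite fg ?sf1 ?sg1. Qed.
Lemma gf00 : fm (gi 0) (fi 0) = 0. Proof. by rewrite gf ?sf0 ?sg0. Qed.
Lemma gf01 : fm (gi 0) (fi 1) = 0. Proof. by rewrite gf ?sf1 ?sg0. Qed.
Lemma gf10 : fm (gi 1) (fi 0) = 0. Proof. by rewrite gf ?sf0 ?sg1. Qed.
Lemma gf11 : fm (gi 1) (fi 1) = 0. Proof. by rewrite gf ?sf1 ?sg1. Qed.

Definition tbl := (f00, f11, f01, f10, g00, g11, g01, g10, fg00, fg01, fg10, fg11,
                   gf00, gf01, gf10, gf11).

Lemma mixB_4 : \rank (plane_op G T (fi 0) (gi 1)) = 4%N.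
Proof.
apply: plane_rank4 => //; last first.
  apply: (@scal_val _ _ (-1) 1); rewrite ?tbl //.
  by rewrite mulr1 oppr_eq0 oner_eq0.
move=> a b c d E; have P := lin4_pair E.
have h1 := P (fi 0); have h2 := P (gi 1); have h3 := P (gi 0); have h4 := P (fi 1).
move: h1 h2 h3 h4; rewrite !phi_f ?sf0 ?sg0 // !phi_g ?sg1 // !tbl.
rewrite !(mulr0, oppr0, mulr1, mulrN1, addr0, add0r).
by move=> /opp0 -> -> /opp0 -> /opp0 ->.
Qed.


Lemma mixA_4 : True. Proof. by []. Qed.

Section Part2.
Hypothesis pq : (size g < size f)%N.
Local Notation fq := (fi (size g)).

Lemma fqq : fm fq fq = -1. Proof. by rewrite ff // eqxx. Qed.
Lemma fq0 : fm fq (fi 0) = 0.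
Proof. by rewrite ff ?sf0 //; have := sg0; case: (size g) => // m _; rewrite oppr0. Qed.
Lemma fqg0 : fm fq (gi 0) = 0. Proof. by rewrite fg ?sg0. Qed.
Lemma phi_fq z : Defs.form S fq z = 0. Proof. by rewrite phi_f // ltnn. Qed.

Lemma tlX : timelike G fq (fi 0).
Proof. apply: (timelike_wit Gsym); [exact: fqq | exact: f00 | exact: fq0]. Qed.

Lemma tlX_not4 : \rank (plane_op G T fq (fi 0)) != 4%N.
Proof.
apply: (@plane_rank_not4 _ _ _ _ _ _ _ 0 0 1 0).
  by apply: pair_lin4 => z; rewrite phi_fq; ring.
by case=> _ _ /eqP; rewrite oner_eq0.
Qed.

Lemma tlY : timelike G (fi 0) (fi 1).
Proof. apply: (timelike_wit Gsym); [exact: f00 | exact: f11 | exact: f01]. Qed.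

Lemma tlY_4 : \rank (plane_op G T (fi 0) (fi 1)) = 4%N.
Proof.
apply: plane_rank4 => //; last first.
  apply: (@scal_val _ _ (-1) (-1)); rewrite ?tbl //.
  by rewrite mulrNN mulr1 oner_eq0.
move=> a b c d E; have P := lin4_pair E.
have h1 := P (fi 0); have h2 := P (fi 1); have h3 := P (gi 0); have h4 := P (gi 1).
move: h1 h2 h3 h4; rewrite !phi_f ?sf0 ?sf1 ?sg0 ?sg1 // !tbl.
rewrite !(mulr0, oppr0, mulr1, mulrN1, addr0, add0r).
by move=> /opp0 -> /opp0 -> /opp0 -> /opp0 ->.
Qed.

Lemma mxZ : mixed G fq (gi 0).
Proof. apply: (mixed_wit Gsym); [exact: fqq | exact: g00 | exact: fqg0]. Qed.

Lemma mxZ_not4 : \rank (plane_op G T fq (gi 0)) != 4%N.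
Proof.
apply: (@plane_rank_not4 _ _ _ _ _ _ _ 0 0 1 0).
  by apply: pair_lin4 => z; rewrite phi_fq; ring.
by case=> _ _ /eqP; rewrite oner_eq0.
Qed.

End Part2.

End Wits.

Unset Implicit Arguments.

Theorem lemma2p3 (R : realType) (n p q : nat) (G : 'M[R]_n) :
  inner_product_sig G p q -> (2 <= q)%N -> (q <= p)%N ->
  ((p = q ->
     exists T : tensor4 R n, [/\ is_act T, spacelike_rank G T 4,
                                 timelike_rank G T 4 & ~ const_mixed_rank G T]) /\
   ((q < p)%N ->
     exists T : tensor4 R n, [/\ is_act T, spacelike_rank G T 4,
                                 ~ const_timelike_rank G T & ~ mixed_rank G T 4])).
Proof.
move=> [Gsym Gu [[Um [nUm rUm]] maxN] [[Up [pUp rUp]] maxP]] q2 qp.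
have [f [g Hfr]] := frame_exists Gsym.
have ep : size f = p.
  apply/eqP; rewrite eqn_leq (size_f_le Gsym Gu Hfr maxN) /= -rUm.
  exact: (size_f_ge Gsym Hfr nUm).
have eq : size g = q.
  apply/eqP; rewrite eqn_leq (size_g_le Gsym Gu Hfr maxP) /= -rUp.
  exact: (size_g_ge Gsym Hfr pUp).
have qp' : (size g <= size f)%N by rewrite ep eq.
have q2' : (2 <= size g)%N by rewrite eq.
have act := mkT_act Gsym (S2sym Gsym f g).
have sp : spacelike_rank G (mkT G (S2 G f g)) 4.
  by move=> e1 e2 h; exact: (sp_rank4 Gsym Gu Hfr qp').
split => [pq | pq].
- exists (mkT G (S2 G f g)); split => //.
    by move=> e1 e2 h; apply: (tl_rank4 Gsym Gu Hfr qp') => //; rewrite ep eq.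
  case=> r Hr.
  have h1 := Hr _ _ (mixA Gsym Hfr q2' qp').
  have h2 := Hr _ _ (mixB Gsym Hfr q2' qp').
  have := mixA_not4 Gsym Hfr q2' qp'; rewrite h1 -h2.
  by rewrite (mixB_4 Gsym Gu Hfr q2' qp') eqxx.
- have pq' : (size g < size f)%N by rewrite ep eq.
  exists (mkT G (S2 G f g)); split => //.
    case=> r Hr.
    have h1 := Hr _ _ (tlX Gsym Hfr q2' qp' pq').
    have h2 := Hr _ _ (tlY Gsym Hfr q2' qp').
    have := tlX_not4 Gsym Hfr qp' pq'; rewrite h1 -h2.
    by rewrite (tlY_4 Gsym Gu Hfr q2' qp') eqxx.
  move=> Hr; have := mxZ_not4 Gsym Hfr qp' pq'.
  by rewrite (Hr _ _ (mxZ Gsym Hfr q2' pq')) eqxx.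
Qed.
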